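(* Let $F$ be a hypergraph with $i(F)=\{I_1,\dots,I_k\}$. Let $H,H_1,H_2$ be hypergraphs with $H=H_1\cup H_2$, and let $S$ be a set with $V(H_1)\cap V(H_2)\subseteq S$ and $S\subseteq V(H_1)\cap V(H_2)$. Let $A_1,\dots,A_k\in tr_S(i(H))$ be such that $\{\bigcap_{i:x\in I_i}A_i\}_{x\in V(F)}$ covers $S$. Then the following are equivalent: (1) $f_H^S(A_1,\dots,A_k)=1$; (2) there exist $A_i^j\in tr_S(i(H_j))$ for $i\in[k]$, $j\in[2]$, with $A_i\subseteq A_i^1\cap A_i^2$ for all $i$, and $f_{H_j}^S(A_1^j,\dots,A_k^j)=1$ for $j=1,2$.
   Context: A hypergraph $H$ has a finite vertex set $V(H)$ and a set $E(H)$ of subsets of $V(H)$. A set of vertices is independent if it contains no edge; $i(H)$ is the family of inclusion-wise maximal independent sets. $H=H_1\cup H_2$ means $V(H)=V(H_1)\cup V(H_2)$ and $E(H)=E(H_1)\cup E(H_2)$. $tr_S(\mathcal{F})=\{X\cap S:X\in\mathcal{F}\}$. A family of sets covers a set $Y$ if its union contains $Y$. An intersection over an empty family is taken to be the whole ambient vertex set. For a hypergraph $H$ and $S\subseteq V(H)$, $f_H^S(A_1,\dots,A_k)=1$ iff: (a) there exist $J_1,\dots,J_k\in i(H)$ such that $\{\bigcap_{i:x\in I_i}J_i\}_{x\in V(F)}$ covers $V(H)$; (b) $\{\bigcap_{i:x\in I_i}A_i\}_{x\in V(F)}$ covers $S$; and (c) $A_i\subseteq J_i$ for all $i$ (with the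 same $J_i$ as in (a)); otherwise $f_H^S(A_1,\dots,A_k)=0$. *)

(* Defs.v *)
From mathcomp Require Import all_boot.
Set Implicit Arguments. Unset Strict Implicit. Unset Printing Implicit Defensive.

Record hypergraph (T : finType) := Hypergraph {
  hV : {set T};
  hE : {set {set T}} }.

Definition wf_hypergraph (T : finType) (H : hypergraph T) : Prop :=
  forall e, e \in hE H -> e \subset hV H.

Definition hunion (T : finType) (H1 H2 : hypergraph T) : hypergraph T :=
  Hypergraph (hV H1 :|: hV H2) (hE H1 :|: hE H2).

Definition independent (T : finType) (H : hypergraph T) (X : {set T}) : bool :=
  (X \subset hV H) && [forall e in hE H, ~~ (e \subset X)].

Definition iH (T : finType) (H : hypergraph T) : {set {set T}} :=
  [set X | maxset (independent H) X].

Definition tr (T : finType) (S : {set T}) (F : {set {set T}}) : {set {set T}} :=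
  [set X :&: S | X in F].

(* Intersection of the A_i over i with x \in I_i; empty intersection = Amb. *)
Definition capfam (T U : finType) (k : nat) (Amb : {set T})
  (I : 'I_k -> {set U}) (A : 'I_k -> {set T}) (x : U) : {set T} :=
  Amb :&: \bigcap_(i | x \in I i) A i.

Definition covers (T U : finType) (VF : {set U}) (fam : U -> {set T}) (Y : {set T}) : Prop :=
  Y \subset \bigcup_(x in VF) fam x.

(* f_H^S(A_1,...,A_k), relative to F with i(F) = {I_1,...,I_k}. *)
Definition fHS (T U : finType) (k : nat) (F : hypergraph U) (I : 'I_k -> {set U})
  (H : hypergraph T) (S : {set T}) (A : 'I_k -> {set T}) : Prop :=
  exists J : 'I_k -> {set T},
    [/\ forall i, J i \in iH H,
        covers (hV F) (capfam (hV H) I J) (hV H),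
        covers (hV F) (capfam (hV H) I A) S &
        forall i, A i \subset J i].

(* Main.v *)
Require Import Defs.
From mathcomp Require Import all_boot.

Lemma cover_pt (T U : finType) k (VF : {set U}) (I : 'I_k -> {set U})
  (Amb Amb' : {set T}) (B B' : 'I_k -> {set T}) v :
  v \in \bigcup_(x in VF) capfam Amb I B x -> v \in Amb' ->
  (forall i, v \in B i -> v \in B' i) ->
  v \in \bigcup_(x in VF) capfam Amb' I B' x.
Proof.
move=> /bigcupP [x xF]; rewrite /capfam inE => /andP [_ /bigcapP Hc] vA HB.
apply/bigcupP; exists x => //; rewrite inE vA /=; apply/bigcapP => i xi.
exact: HB _ (Hc i xi).
Qed.

Arguments cover_pt {T U k VF I Amb Amb' B B' v}.

Lemma indep_part (T : finType) (H1 : hypergraph T) (V2 S J1 X A e : {set T}) :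
  wf_hypergraph H1 -> hV H1 :&: V2 \subset S -> independent H1 J1 ->
  A \subset J1 -> X \subset V2 -> e \in hE H1 ->
  ~~ (e \subset (J1 :\: S) :|: (X :\: S) :|: A).
Proof.
move=> wf sS /andP [_ /forallP iJ] AJ XV eE; apply/negP => sub.
have := iJ e; rewrite eE /= => /negP; apply; apply/subsetP => y ye.
have yV := subsetP (wf _ eE) _ ye.
move: (subsetP sub _ ye); rewrite !inE => /orP [/orP [/andP [] //|/andP [yS yX]]|yA].
- by move: yS; rewrite (subsetP sS) // inE yV (subsetP XV).
- exact: (subsetP AJ).
Qed.

Arguments indep_part {T H1 V2 S J1 X A e}.

Theorem mainTheorem13 (T U : finType) (k : nat) (F : hypergraph U)
  (I : 'I_k -> {set U}) (H1 H2 : hypergraph T) (S : {set T})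
  (A : 'I_k -> {set T}) :
  wf_hypergraph F -> wf_hypergraph H1 -> wf_hypergraph H2 ->
  injective I -> [set I i | i : 'I_k] = iH F ->
  hV H1 :&: hV H2 \subset S -> S \subset hV H1 :&: hV H2 ->
  (forall i, A i \in tr S (iH (hunion H1 H2))) ->
  covers (hV F) (capfam (hV (hunion H1 H2)) I A) S ->
  (fHS F I (hunion H1 H2) S A <->
   exists A1 A2 : 'I_k -> {set T},
     [/\ forall i, A1 i \in tr S (iH H1),
         forall i, A2 i \in tr S (iH H2),
         forall i, A i \subset A1 i :&: A2 i,
         fHS F I H1 S A1 &
         fHS F I H2 S A2]).
Proof.
move=> _ wf1 wf2 _ _ sS1 sS2 Atr covA.
have AS i : A i \subset S.
  by case/imsetP: (Atr i) => X _ ->; apply: subsetIr.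
have S1 : S \subset hV H1 by apply: (subset_trans sS2); apply: subsetIl.
have S2 : S \subset hV H2 by apply: (subset_trans sS2); apply: subsetIr.
split.
- case=> J [Ji covJ _ AJ].
  have indJ i : independent (hunion H1 H2) (J i).
    by move: (Ji i); rewrite inE => /maxsetp.
  have restr (Hj : hypergraph T) : hE Hj \subset hE (hunion H1 H2) ->
      hV Hj \subset hV (hunion H1 H2) -> S \subset hV Hj ->
      exists Aj : 'I_k -> {set T},
      (forall i, Aj i \in tr S (iH Hj)) /\ (forall i, A i \subset Aj i) /\
      fHS F I Hj S Aj.
    move=> sE sV sSj.
    have ind i : independent Hj (J i :&: hV Hj).
      apply/andP; split; first exact: subsetIr.
      apply/forallP => e; apply/implyP => eE.
      move: (indJ i) => /andP [_ /forallP /(_ e)].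
      rewrite (subsetP sE _ eE) /=; apply: contra => /subset_trans; apply.
      exact: subsetIl.
    pose Jj i := sval (maxset_exists (ind i)).
    have Jjm i : maxset (independent Hj) (Jj i) by rewrite /Jj; case: maxset_exists.
    have Jjs i : J i :&: hV Hj \subset Jj i by rewrite /Jj; case: maxset_exists.
    exists (fun i => Jj i :&: S); split; last split.
    + by move=> i; apply/imsetP; exists (Jj i) => //; rewrite inE.
    + move=> i; rewrite subsetI AS andbT; apply: subset_trans (Jjs i).
      rewrite subsetI (subset_trans (AS i) sSj) andbT; exact: AJ.
    + exists Jj; split.
      * by move=> i; rewrite inE.
      * rewrite /covers; apply/subsetP => v vV; have vV' := vV; apply: cover_pt (subsetP covJ v (subsetP sV v vV)) vV _.
        by move=> i vJ; apply: (subsetP (Jjs i)); rewrite inE vJ vV'.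
      * rewrite /covers; apply/subsetP => v vS; apply: cover_pt (subsetP covA v vS) (subsetP sSj v vS) _.
        move=> i vA; rewrite inE vS andbT; apply: (subsetP (Jjs i)).
        by rewrite inE (subsetP (AJ i)) // (subsetP sSj).
      * by move=> i; apply: subsetIl.
  have [A1 [A1t [AA1 f1]]] := restr H1 (subsetUl _ _) (subsetUl _ _) S1.
  have [A2 [A2t [AA2 f2]]] := restr H2 (subsetUr _ _) (subsetUr _ _) S2.
  exists A1, A2; split => // i; by rewrite subsetI AA1 AA2.
- case=> A1 [A2 [_ _ AA [J1 [J1i cov1 _ AJ1]] [J2 [J2i cov2 _ AJ2]]]].
  have ind1 i : independent H1 (J1 i) by move: (J1i i); rewrite inE => /maxsetp.
  have ind2 i : independent H2 (J2 i) by move: (J2i i); rewrite inE => /maxsetp.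
  have AJ1' i : A i \subset J1 i.
    by apply: subset_trans (AA i) _; apply: subset_trans (AJ1 i); apply: subsetIl.
  have AJ2' i : A i \subset J2 i.
    by apply: subset_trans (AA i) _; apply: subset_trans (AJ2 i); apply: subsetIr.
  have J1V i : J1 i \subset hV H1 by case/andP: (ind1 i).
  have J2V i : J2 i \subset hV H2 by case/andP: (ind2 i).
  pose J0 i := (J1 i :\: S) :|: (J2 i :\: S) :|: A i.
  have ind i : independent (hunion H1 H2) (J0 i).
    apply/andP; split.
      rewrite /J0 /hunion /= !subUset; apply/andP; split; first (apply/andP; split).
      - by apply: subset_trans (subsetDl _ _) _; apply: subset_trans (J1V i) _; apply: subsetUl.
      - by apply: subset_trans (subsetDl _ _) _; apply: subset_trans (J2V i) _; apply: subsetUr.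
      - by apply: subset_trans (AJ1' i) _; apply: subset_trans (J1V i) _; apply: subsetUl.
    apply/forallP => e; apply/implyP; rewrite /hunion /= inE => /orP [eE|eE].
    - exact: (indep_part wf1 sS1 (ind1 i) (AJ1' i) (J2V i) eE).
    - have -> : J0 i = (J2 i :\: S) :|: (J1 i :\: S) :|: A i.
        by rewrite /J0 (setUC (J1 i :\: S)).
      by apply: (indep_part wf2 _ (ind2 i) (AJ2' i) (J1V i) eE); rewrite setIC.
  pose J i := sval (maxset_exists (ind i)).
  have Jm i : maxset (independent (hunion H1 H2)) (J i) by rewrite /J; case: maxset_exists.
  have Js i : J0 i \subset J i by rewrite /J; case: maxset_exists.
  exists J; split => //.
  + by move=> i; rewrite inE.
  + rewrite /covers; apply/subsetP => v; rewrite /hunion /= => vV.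
    case vS: (v \in S).
      apply: cover_pt (subsetP covA v vS) vV _ => i vA.
      by apply: (subsetP (Js i)); rewrite !inE vA !orbT.
    move: vV; rewrite inE => /orP [vV|vV].
    * apply: cover_pt (subsetP cov1 v vV) _ _; first by rewrite inE vV.
      by move=> i vJ; apply: (subsetP (Js i)); rewrite !inE vS vJ.
    * apply: cover_pt (subsetP cov2 v vV) _ _; first by rewrite inE vV orbT.
      by move=> i vJ; apply: (subsetP (Js i)); rewrite !inE vS vJ !orbT.
  + by move=> i; apply: subset_trans (Js i); apply: subsetUr.
Qed.
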